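(* Let $C$ be a concrete category (each object has an underlying set and morphisms are functions composed as functions) such that (i) set-theoretic finite products and equalizers are also finite products and equalizers in $C$, and (ii) for every $C$-morphism $f:X\to Y$ there are a $C$-object $U$ and a $C$-morphism $u:U\to X\times Y$ with the graph of $f$ equal to the range of $u$. Then $\mathrm{Rel}(C)$, equipped with the cartesian product as monoidal product and the cartesian trace, is a traced symmetric monoidal category having $C$ as a subcategory. If moreover a function between $C$-objects is a $C$-morphism if and only if its graph is the range of some $C$-morphism, then this subcategory consists precisely of those morphisms of $\mathrm{Rel}(C)$ which are set-theoretic functions.
   Context: A $C$-relation between $C$-objects $X$ and $Y$ is a relation $r\subseteq X\times Y$ which equals the range of some $C$-morphism $u:U\to X\times Y$ for some $C$-object $U$. $\mathrm{Rel}(C)$ is the category with the same objects as $C$, whose morphisms from $X$ to $Y$ are the $C$-relations between $X$ and $Y$, composed by relational composition. The cartesian trace of a relation $r\subseteq (X\times Z)\times(Y\times Z)$ is the relation $\mathsf{Tr}(r)\subseteq X\times Y$ with $(x,y)\in\mathsf{Tr}(r)$ iff there is $z\in Z$ with $((x,z),(y,z))\in r$. *)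

(* Defs.v *)
From mathcomp Require Import ssreflect ssrfun ssrbool.
Set Implicit Arguments.
Unset Strict Implicit.

(* The data of a (strict-unbiased) traced symmetric monoidal structure on a
   category with objects [ob] and hom-types [hom], whose monoidal product on
   objects is [tn] and monoidal unit is [I].  [comp g f] is "g after f".
   [trace X Y U f] is Tr^U_{X,Y}(f) for f : X (x) U -> Y (x) U. *)
Record tsmc_ops (ob : Type) (hom : ob -> ob -> Type) (tn : ob -> ob -> ob)
    (I : ob) := TsmcOps {
  idm : forall X, hom X X;
  ccomp : forall X Y Z, hom Y Z -> hom X Y -> hom X Z;
  tens : forall X X' Y Y', hom X Y -> hom X' Y' -> hom (tn X X') (tn Y Y');
  assoc : forall X Y Z, hom (tn (tn X Y) Z) (tn X (tn Y Z));
  assoc_inv : forall X Y Z, hom (tn X (tn Y Z)) (tn (tn X Y) Z);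
  lunit : forall X, hom (tn I X) X;
  lunit_inv : forall X, hom X (tn I X);
  runit : forall X, hom (tn X I) X;
  runit_inv : forall X, hom X (tn X I);
  braid : forall X Y, hom (tn X Y) (tn Y X);
  trace : forall X Y U, hom (tn X U) (tn Y U) -> hom X Y
}.

Arguments idm {ob hom tn I} t X.
Arguments ccomp {ob hom tn I} t {X Y Z}.
Arguments tens {ob hom tn I} t {X X' Y Y'}.
Arguments assoc {ob hom tn I} t X Y Z.
Arguments assoc_inv {ob hom tn I} t X Y Z.
Arguments lunit {ob hom tn I} t X.
Arguments lunit_inv {ob hom tn I} t X.
Arguments runit {ob hom tn I} t X.
Arguments runit_inv {ob hom tn I} t X.
Arguments braid {ob hom tn I} t X Y.
Arguments trace {ob hom tn I} t {X Y U}.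

Record is_tsmc (ob : Type) (hom : ob -> ob -> Type) (tn : ob -> ob -> ob)
    (I : ob) (o : tsmc_ops hom tn I) : Prop := IsTsmc {
  comp_assoc : forall W X Y Z (f : hom W X) (g : hom X Y) (h : hom Y Z),
    ccomp o h (ccomp o g f) = ccomp o (ccomp o h g) f;
  comp_id_l : forall X Y (f : hom X Y), ccomp o (idm o Y) f = f;
  comp_id_r : forall X Y (f : hom X Y), ccomp o f (idm o X) = f;
  tens_id : forall X Y, tens o (idm o X) (idm o Y) = idm o (tn X Y);
  tens_comp : forall X X' Y Y' Z Z' (f : hom X Y) (g : hom Y Z)
      (f' : hom X' Y') (g' : hom Y' Z'),
    tens o (ccomp o g f) (ccomp o g' f') = ccomp o (tens o g g') (tens o f f');
  assoc_iso1 : forall X Y Z,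
    ccomp o (assoc_inv o X Y Z) (assoc o X Y Z) = idm o (tn (tn X Y) Z);
  assoc_iso2 : forall X Y Z,
    ccomp o (assoc o X Y Z) (assoc_inv o X Y Z) = idm o (tn X (tn Y Z));
  assoc_nat : forall X X' Y Y' Z Z' (f : hom X X') (g : hom Y Y') (h : hom Z Z'),
    ccomp o (assoc o X' Y' Z') (tens o (tens o f g) h)
    = ccomp o (tens o f (tens o g h)) (assoc o X Y Z);
  lunit_iso1 : forall X, ccomp o (lunit_inv o X) (lunit o X) = idm o (tn I X);
  lunit_iso2 : forall X, ccomp o (lunit o X) (lunit_inv o X) = idm o X;
  lunit_nat : forall X Y (f : hom X Y),
    ccomp o (lunit o Y) (tens o (idm o I) f) = ccomp o f (lunit o X);
  runit_iso1 : forall X, ccomp o (runit_inv o X) (runit o X) = idm o (tn X I);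
  runit_iso2 : forall X, ccomp o (runit o X) (runit_inv o X) = idm o X;
  runit_nat : forall X Y (f : hom X Y),
    ccomp o (runit o Y) (tens o f (idm o I)) = ccomp o f (runit o X);
  pentagon : forall W X Y Z,
    ccomp o (assoc o W X (tn Y Z)) (assoc o (tn W X) Y Z)
    = ccomp o (tens o (idm o W) (assoc o X Y Z))
        (ccomp o (assoc o W (tn X Y) Z) (tens o (assoc o W X Y) (idm o Z)));
  triangle : forall X Y,
    ccomp o (tens o (idm o X) (lunit o Y)) (assoc o X I Y)
    = tens o (runit o X) (idm o Y);
  braid_nat : forall X X' Y Y' (f : hom X X') (g : hom Y Y'),
    ccomp o (braid o X' Y') (tens o f g) = ccomp o (tens o g f) (braid o X Y);
  braid_sym : forall X Y, ccomp o (braid o Y X) (braid o X Y) = idm o (tn X Y);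
  hexagon : forall X Y Z,
    ccomp o (assoc o Y Z X) (ccomp o (braid o X (tn Y Z)) (assoc o X Y Z))
    = ccomp o (tens o (idm o Y) (braid o X Z))
        (ccomp o (assoc o Y X Z) (tens o (braid o X Y) (idm o Z)));
  trace_nat_l : forall X X' Y U (g : hom X' X) (f : hom (tn X U) (tn Y U)),
    trace o (ccomp o f (tens o g (idm o U))) = ccomp o (trace o f) g;
  trace_nat_r : forall X Y Y' U (h : hom Y Y') (f : hom (tn X U) (tn Y U)),
    trace o (ccomp o (tens o h (idm o U)) f) = ccomp o h (trace o f);
  trace_dinat : forall X Y U U' (f : hom (tn X U) (tn Y U')) (g : hom U' U),
    trace o (ccomp o (tens o (idm o Y) g) f)
    = trace o (ccomp o f (tens o (idm o X) g));
  trace_vanish1 : forall X Y (f : hom (tn X I) (tn Y I)),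
    trace o f = ccomp o (runit o Y) (ccomp o f (runit_inv o X));
  trace_vanish2 : forall X Y U V (f : hom (tn X (tn U V)) (tn Y (tn U V))),
    trace o f
    = trace o (trace o (ccomp o (assoc_inv o Y U V) (ccomp o f (assoc o X U V))));
  trace_superpose : forall W Z X Y U (g : hom W Z) (f : hom (tn X U) (tn Y U)),
    trace o (ccomp o (assoc_inv o Z Y U) (ccomp o (tens o g f) (assoc o W X U)))
    = tens o g (trace o f);
  trace_yank : forall U, trace o (braid o U U) = idm o U
}.

Unset Implicit Arguments.
Record concrete_cat := ConcreteCat {
  cobj : Type;
  ccar : cobj -> Type;
  chom : forall X Y : cobj, (ccar X -> ccar Y) -> Prop;
  chom_id : forall X, chom X X id;
  chom_comp : forall X Y Z (f : ccar X -> ccar Y) (g : ccar Y -> ccar Z),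
    chom X Y f -> chom Y Z g -> chom X Z (g \o f)
}.

Arguments ccar {c} _.
Arguments chom {c} X Y _.
Set Implicit Arguments.

Section ConcreteDefs.
Variable C : concrete_cat.

(* (P, e) realizes the set-theoretic product ccar X * ccar Y (e is a bijection
   of underlying sets), and it is a product in C with the set-theoretic
   projections: projections are morphisms and a function into P is a morphism
   iff its components are. *)
Definition set_product_in (X Y P : cobj C) (e : ccar P -> ccar X * ccar Y) :=
  bijective e /\ chom P X (fst \o e) /\ chom P Y (snd \o e) /\
  forall Z (h : ccar Z -> ccar P),
    chom Z X (fst \o e \o h) -> chom Z Y (snd \o e \o h) -> chom Z P h.

Definition set_terminal_in (T : cobj C) :=
  (exists t : ccar T, forall t', t' = t) /\
  forall Z (h : ccar Z -> ccar T), chom Z T h.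

Definition set_equalizers :=
  forall (X Y : cobj C) (f g : ccar X -> ccar Y), chom X Y f -> chom X Y g ->
  exists (E : cobj C) (m : ccar E -> ccar X),
    injective m /\ (forall x, (exists w, m w = x) <-> f x = g x) /\
    chom E X m /\
    forall Z (h : ccar Z -> ccar E), chom Z X (m \o h) -> chom Z E h.

Variable prodO : cobj C -> cobj C -> cobj C.
Variable pe : forall X Y, ccar (prodO X Y) -> ccar X * ccar Y.
Variable unitO : cobj C.

Definition relation (X Y : cobj C) := ccar X -> ccar Y -> Prop.

Definition is_crel (X Y : cobj C) (r : relation X Y) :=
  exists (U : cobj C) (u : ccar U -> ccar (prodO X Y)),
    chom U (prodO X Y) u /\ forall x y, r x y <-> exists w, pe (u w) = (x, y).

Definition CRel (X Y : cobj C) := {r : relation X Y | is_crel r}.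

Definition rgraph X Y (f : ccar X -> ccar Y) : relation X Y := fun x y => f x = y.
Definition rid X : relation X X := fun x y => x = y.
Definition rcomp X Y Z (s : relation Y Z) (r : relation X Y) : relation X Z :=
  fun x z => exists y, r x y /\ s y z.
Definition rtens X X' Y Y' (r : relation X Y) (s : relation X' Y') :
    relation (prodO X X') (prodO Y Y') :=
  fun p q => r (pe p).1 (pe q).1 /\ s (pe p).2 (pe q).2.
Definition rassoc X Y Z : relation (prodO (prodO X Y) Z) (prodO X (prodO Y Z)) :=
  fun p q => (pe (pe p).1).1 = (pe q).1 /\ (pe (pe p).1).2 = (pe (pe q).2).1
             /\ (pe p).2 = (pe (pe q).2).2.
Definition rassoc_inv X Y Z : relation (prodO X (prodO Y Z)) (prodO (prodO X Y) Z) :=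
  fun q p => rassoc p q.
Definition rlunit X : relation (prodO unitO X) X := fun p x => (pe p).2 = x.
Definition rlunit_inv X : relation X (prodO unitO X) := fun x p => rlunit p x.
Definition rrunit X : relation (prodO X unitO) X := fun p x => (pe p).1 = x.
Definition rrunit_inv X : relation X (prodO X unitO) := fun x p => rrunit p x.
Definition rbraid X Y : relation (prodO X Y) (prodO Y X) :=
  fun p q => (pe p).1 = (pe q).2 /\ (pe p).2 = (pe q).1.
Definition rtrace X Y U (r : relation (prodO X U) (prodO Y U)) : relation X Y :=
  fun x y => exists (z : ccar U) p q, pe p = (x, z) /\ pe q = (y, z) /\ r p q.

End ConcreteDefs.

Arguments rid {C} X _ _.
Arguments rassoc {C prodO} pe X Y Z _ _.
Arguments rassoc_inv {C prodO} pe X Y Z _ _.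
Arguments rlunit {C prodO} pe unitO X _ _.
Arguments rlunit_inv {C prodO} pe unitO X _ _.
Arguments rrunit {C prodO} pe unitO X _ _.
Arguments rrunit_inv {C prodO} pe unitO X _ _.
Arguments rbraid {C prodO} pe X Y _ _.
Arguments rgraph {C} X Y f _ _.

(* Main.v *)
Require Import Defs.
From mathcomp Require Import ssreflect ssrfun ssrbool.
From Stdlib Require Import ClassicalEpsilon FunctionalExtensionality PropExtensionality ProofIrrelevance Setoid Morphisms.
Set Implicit Arguments.
Unset Strict Implicit.

Section S.
Variable C : concrete_cat.
Variable prodO : cobj C -> cobj C -> cobj C.
Variable pe : forall X Y, ccar (prodO X Y) -> ccar X * ccar Y.
Variable unitO : cobj C.
Hypothesis Hprod : forall X Y, set_product_in (@pe X Y).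
Hypothesis Hunit : set_terminal_in unitO.
Hypothesis Heq : set_equalizers C.
Implicit Types X Y Z U V W Q E : cobj C.

Lemma pinv_ex X Y : {g : ccar X * ccar Y -> ccar (prodO X Y) | cancel (@pe X Y) g /\ cancel g (@pe X Y)}.
Proof. apply: constructive_indefinite_description. case: (Hprod X Y) => [[g h1 h2] _]. by exists g. Qed.
Definition pinv X Y := sval (pinv_ex X Y).
Arguments pinv {X Y} : simpl never.
Lemma pinv_pe X Y p : pinv (@pe X Y p) = p. Proof. exact: (proj1 (svalP (pinv_ex X Y))). Qed.
Lemma pe_pinv X Y z : @pe X Y (pinv z) = z. Proof. exact: (proj2 (svalP (pinv_ex X Y))). Qed.
Lemma pinv_inj X Y z z' : @pinv X Y z = pinv z' <-> z = z'.
Proof. split=> [h|->//]. by rewrite -(pe_pinv z) h pe_pinv. Qed.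
Lemma pair_eq A B (a a' : A) (b b' : B) : (a, b) = (a', b') <-> a = a' /\ b = b'.
Proof. split=> [[-> ->]|[-> ->]] //. Qed.
Lemma ex_prod X Y (P : ccar (prodO X Y) -> Prop) : (exists p, P p) <-> exists a b, P (pinv (a, b)).
Proof. split=> [[p Hp]|[a [b H]]]; last by exists (pinv (a,b)).
  exists (pe p).1, (pe p).2. by rewrite -surjective_pairing pinv_pe. Qed.
Lemma prod_ind X Y (P : ccar (prodO X Y) -> Prop) : (forall a b, P (pinv (a, b))) -> forall p, P p.
Proof. move=> H p. rewrite -(pinv_pe p) (surjective_pairing (pe p)). exact: H. Qed.

Lemma hom_fst X Y : chom (prodO X Y) X (fun p => (pe p).1).
Proof. by case: (Hprod X Y) => _ [h _]. Qed.
Lemma hom_snd X Y : chom (prodO X Y) Y (fun p => (pe p).2).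
Proof. by case: (Hprod X Y) => _ [_ [h _]]. Qed.
Lemma hom_comp X Y Z (f : ccar X -> ccar Y) (g : ccar Y -> ccar Z) :
  chom X Y f -> chom Y Z g -> chom X Z (fun x => g (f x)).
Proof. exact: chom_comp. Qed.
Lemma pair_hom Z X Y (a : ccar Z -> ccar X) (b : ccar Z -> ccar Y) :
  chom Z X a -> chom Z Y b -> chom Z (prodO X Y) (fun z => pinv (a z, b z)).
Proof. move=> ha hb. case: (Hprod X Y) => _ [_ [_ H]]. apply: H.
  - have -> : (fst \o @pe X Y \o (fun z => pinv (a z, b z))) = a.
      by apply: functional_extensionality => z /=; rewrite pe_pinv.
    done.
  - have -> : (snd \o @pe X Y \o (fun z => pinv (a z, b z))) = b.
      by apply: functional_extensionality => z /=; rewrite pe_pinv.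
    done.
Qed.

Definition span X Y (r : @Defs.relation C X Y) := exists W (a : ccar W -> ccar X) (b : ccar W -> ccar Y),
  chom W X a /\ chom W Y b /\ forall x y, r x y <-> exists w, a w = x /\ b w = y.

Lemma crel_span X Y (r : @Defs.relation C X Y) : is_crel pe r <-> span r.
Proof. split.
- move=> [U [u [hu H]]]. exists U, (fun w => (pe (u w)).1), (fun w => (pe (u w)).2).
  split; first exact: hom_comp hu (hom_fst X Y).
  split; first exact: hom_comp hu (hom_snd X Y).
  move=> x y. rewrite H. split=> [[w hw]|[w [h1 h2]]]; exists w.
  + by rewrite hw.
  + by rewrite (surjective_pairing (pe (u w))) h1 h2.
- move=> [W [a [b [ha [hb H]]]]]. exists W, (fun w => pinv (a w, b w)).
  split; first exact: pair_hom. move=> x y; rewrite H.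
  split=> [[w [<- <-]]|[w hw]]; exists w; first by rewrite pe_pinv.
  by move: hw; rewrite pe_pinv => -[-> ->].
Qed.

Lemma span_gen X Y W Q (a : ccar W -> ccar X) (b : ccar W -> ccar Y) (p1 p2 : ccar W -> ccar Q)
  (r : @Defs.relation C X Y) :
  chom W X a -> chom W Y b -> chom W Q p1 -> chom W Q p2 ->
  (forall x y, r x y <-> exists w, p1 w = p2 w /\ a w = x /\ b w = y) -> is_crel pe r.
Proof. move=> ha hb h1 h2 H. apply/crel_span.
  case: (Heq h1 h2) => E [m [_ [Hm [hm _]]]].
  exists E, (fun e => a (m e)), (fun e => b (m e)).
  split; first exact: hom_comp hm ha. split; first exact: hom_comp hm hb.
  move=> x y; rewrite H. split=> [[w [e [hx hy]]]|[e [hx hy]]].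
  - have [e' he'] := proj2 (Hm w) e. exists e'. by rewrite he'.
  - exists (m e). split=> //. apply/Hm. by exists e.
Qed.

Lemma crel_fun X Y (f : ccar X -> ccar Y) (r : @Defs.relation C X Y) :
  chom X Y f -> (forall x y, r x y <-> f x = y) -> is_crel pe r.
Proof. move=> hf H. apply: (span_gen (a := id) (b := f) (p1 := id) (p2 := id)) => //; try exact: chom_id.
  move=> x y; rewrite H. split=> [<-|[w [_ [<- <-]]]] //. by exists x. Qed.


Lemma unit_ex : {t : ccar unitO | forall t', t' = t}.
Proof. apply: constructive_indefinite_description. by case: Hunit. Qed.
Definition unit_pt := sval unit_ex.
Lemma unit_eq t : t = unit_pt. Proof. exact: (svalP unit_ex). Qed.

Ltac norm := cbv beta delta [rcomp rtens rassoc rassoc_inv rlunit rlunit_inv rrunit rrunit_inv rbraid rtrace rid rgraph];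
  repeat (setoid_rewrite ex_prod); cbv beta; repeat setoid_rewrite pe_pinv; cbn [fst snd];
  repeat setoid_rewrite pinv_inj; repeat setoid_rewrite pair_eq.
Ltac splitv := repeat match goal with p : ccar (prodO _ _) |- _ => elim/prod_ind: p => ? ? end.
Ltac crush := repeat (match goal with
 | H : exists _, _ |- _ => destruct H
 | H : _ /\ _ |- _ => destruct H
 | H : ?x = _ |- _ => is_var x; subst x
 | H : _ = ?x |- _ => is_var x; subst x
 | u : ccar unitO |- _ => lazymatch u with unit_pt => fail | _ => let e := fresh in have e := unit_eq u; subst u end
 | H : (_, _) = (_, _) |- _ => injection H; clear H; intros
 | |- (_, _) = (_, _) => f_equal
 | H : pinv _ = pinv _ |- _ => apply pinv_inj in H
 | |- pinv _ = pinv _ => apply/pinv_inj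
 | |- _ <-> _ => split
 | |- _ -> _ => intro
 | |- _ /\ _ => split
 | |- exists _, _ => eexists
 | |- _ = _ => reflexivity
 | H : ?P |- ?P => exact H
 end); try solve [eauto].
Ltac ext2 := apply: functional_extensionality => ?; apply: functional_extensionality => ?;
  apply: propositional_extensionality.

Lemma crel_comp X Y Z (r : @Defs.relation C X Y) (s : @Defs.relation C Y Z) :
  is_crel pe r -> is_crel pe s -> is_crel pe (rcomp s r).
Proof. move=> /crel_span [U [a1 [b1 [ha1 [hb1 Hr]]]]] /crel_span [V [a2 [b2 [ha2 [hb2 Hs]]]]].
  apply: (span_gen (W := prodO U V) (a := fun w => a1 (pe w).1) (b := fun w => b2 (pe w).2)
    (p1 := fun w => b1 (pe w).1) (p2 := fun w => a2 (pe w).2)).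
  all: try (apply: hom_comp; [exact: hom_fst | done] || (apply: hom_comp; [exact: hom_snd | done])).
  move=> x z. rewrite /rcomp. setoid_rewrite Hr. setoid_rewrite Hs. norm. crush.
Qed.

Lemma crel_tens X X' Y Y' (r : @Defs.relation C X Y) (s : @Defs.relation C X' Y') :
  is_crel pe r -> is_crel pe s -> is_crel pe (rtens pe r s).
Proof. move=> /crel_span [U [a1 [b1 [ha1 [hb1 Hr]]]]] /crel_span [V [a2 [b2 [ha2 [hb2 Hs]]]]].
  apply: (span_gen (W := prodO U V) (a := fun w => pinv (a1 (pe w).1, a2 (pe w).2))
    (b := fun w => pinv (b1 (pe w).1, b2 (pe w).2))
    (p1 := fun w => a1 (pe w).1) (p2 := fun w => a1 (pe w).1)).
  all: try (apply: pair_hom; apply: hom_comp; (exact: hom_fst || exact: hom_snd || done)).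
  all: try (apply: hom_comp; [exact: hom_fst | done]).
  move=> p q. rewrite /rtens. setoid_rewrite Hr. setoid_rewrite Hs. splitv. norm. crush.
Qed.

Lemma crel_trace X Y U (r : @Defs.relation C (prodO X U) (prodO Y U)) :
  is_crel pe r -> is_crel pe (rtrace pe r).
Proof. move=> /crel_span [W [a [b [ha [hb Hr]]]]].
  apply: (span_gen (W := W) (a := fun w => (pe (a w)).1) (b := fun w => (pe (b w)).1)
    (p1 := fun w => (pe (a w)).2) (p2 := fun w => (pe (b w)).2)).
  exact: (hom_comp ha (hom_fst X U)). exact: (hom_comp hb (hom_fst Y U)).
  exact: (hom_comp ha (hom_snd X U)). exact: (hom_comp hb (hom_snd Y U)).
  move=> x y. rewrite /rtrace. split.
  - move=> [z [p [q [hp [hq /Hr [w [ea eb]]]]]]]. exists w. by rewrite ea eb hp hq.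
  - move=> [w [e [hx hy]]]. exists (pe (a w)).2, (a w), (b w).
    split; first by rewrite -hx -surjective_pairing.
    split; first by rewrite -hy e -surjective_pairing.
    apply/Hr. by exists w.
Qed.

Lemma crel_conv X Y (r : @Defs.relation C X Y) : is_crel pe r -> is_crel pe (fun y x => r x y).
Proof. move=> /crel_span [W [a [b [ha [hb H]]]]]. apply/crel_span.
  exists W, b, a. do 2 (split=> //). move=> y x. rewrite H. by split=> -[w [h1 h2]]; exists w. Qed.

Lemma crel_id X : is_crel pe (rid X).
Proof. apply: (crel_fun (f := id)); first exact: chom_id. by []. Qed.

Definition assocf X Y Z (p : ccar (prodO (prodO X Y) Z)) : ccar (prodO X (prodO Y Z)) :=
  pinv ((pe (pe p).1).1, pinv ((pe (pe p).1).2, (pe p).2)).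

Lemma crel_assoc X Y Z : is_crel pe (rassoc pe X Y Z).
Proof. apply: (crel_fun (f := @assocf X Y Z)).
  - apply: pair_hom. exact: (hom_comp (hom_fst _ _) (hom_fst _ _)).
    apply: pair_hom. exact: (hom_comp (hom_fst _ _) (hom_snd _ _)). exact: hom_snd.
  - move=> p q. rewrite /assocf. splitv. norm. crush.
Qed.

Lemma crel_braid X Y : is_crel pe (rbraid pe X Y).
Proof. apply: (crel_fun (f := fun p => pinv ((@pe X Y p).2, (pe p).1))).
  - apply: pair_hom. exact: hom_snd. exact: hom_fst.
  - move=> p q. splitv. norm. crush.
Qed.

Lemma crel_lunit X : is_crel pe (rlunit pe unitO X).
Proof. apply: (crel_fun (f := fun p => (@pe unitO X p).2)); first exact: hom_snd. by []. Qed.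
Lemma crel_runit X : is_crel pe (rrunit pe unitO X).
Proof. apply: (crel_fun (f := fun p => (@pe X unitO p).1)); first exact: hom_fst. by []. Qed.

Definition Rops : tsmc_ops (CRel pe) prodO unitO :=
  @TsmcOps _ _ prodO unitO
   (fun X => exist _ _ (crel_id X))
   (fun X Y Z s r => exist _ _ (crel_comp (proj2_sig r) (proj2_sig s)))
   (fun X X' Y Y' r s => exist _ _ (crel_tens (proj2_sig r) (proj2_sig s)))
   (fun X Y Z => exist _ _ (crel_assoc X Y Z))
   (fun X Y Z => exist _ _ (crel_conv (crel_assoc X Y Z)))
   (fun X => exist _ _ (crel_lunit X))
   (fun X => exist _ _ (crel_conv (crel_lunit X)))
   (fun X => exist _ _ (crel_runit X))
   (fun X => exist _ _ (crel_conv (crel_runit X)))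
   (fun X Y => exist _ _ (crel_braid X Y))
   (fun X Y U r => exist _ _ (crel_trace (proj2_sig r))).

Lemma sval_inj X Y (a b : CRel pe X Y) : sval a = sval b -> a = b.
Proof. case: a => a ha; case: b => b hb /= e. subst b. f_equal. exact: proof_irrelevance. Qed.

Ltac ax := intros; apply: sval_inj; cbn [sval proj1_sig Rops idm ccomp tens assoc assoc_inv lunit lunit_inv runit runit_inv braid trace]; ext2; splitv; norm; crush.

Lemma Rops_tsmc : is_tsmc Rops.
Proof.
constructor.
all: try solve [ax]. all: ax. all: exact: unit_pt.
Qed.

End S.

Theorem theorem5p1 (C : concrete_cat)
  (prodO : cobj C -> cobj C -> cobj C)
  (pe : forall X Y, ccar (prodO X Y) -> ccar X * ccar Y)
  (unitO : cobj C)
  (* (i) set-theoretic finite products and equalizers are such in C *)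
  (Hprod : forall X Y, set_product_in (pe X Y))
  (Hunit : set_terminal_in unitO)
  (Heq : set_equalizers C)
  (* (ii) graphs of C-morphisms are ranges of C-morphisms *)
  (Hgraph : forall X Y (f : ccar X -> ccar Y),
     chom X Y f -> is_crel pe (rgraph X Y f)) :
  (exists o : tsmc_ops (CRel pe) prodO unitO,
     is_tsmc o /\
     (forall X, sval (idm o X) = rid X) /\
     (forall X Y Z (s : CRel pe Y Z) (r : CRel pe X Y),
        sval (ccomp o s r) = rcomp (sval s) (sval r)) /\
     (forall X X' Y Y' (r : CRel pe X Y) (s : CRel pe X' Y'),
        sval (tens o r s) = rtens pe (sval r) (sval s)) /\
     (forall X Y Z, sval (assoc o X Y Z) = rassoc pe X Y Z) /\
     (forall X Y Z, sval (assoc_inv o X Y Z) = rassoc_inv pe X Y Z) /\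
     (forall X, sval (lunit o X) = rlunit pe unitO X) /\
     (forall X, sval (lunit_inv o X) = rlunit_inv pe unitO X) /\
     (forall X, sval (runit o X) = rrunit pe unitO X) /\
     (forall X, sval (runit_inv o X) = rrunit_inv pe unitO X) /\
     (forall X Y, sval (braid o X Y) = rbraid pe X Y) /\
     (forall X Y U (r : CRel pe (prodO X U) (prodO Y U)),
        sval (trace o r) = rtrace pe (sval r))) /\
  (* C is a subcategory of Rel(C) via f |-> graph f *)
  (forall X Y (f : ccar X -> ccar Y), chom X Y f -> is_crel pe (rgraph X Y f)) /\
  (forall X : cobj C, rgraph X X id = @rid C X) /\
  (forall X Y Z : cobj C, forall (f : ccar X -> ccar Y) (g : ccar Y -> ccar Z),
     rgraph X Z (g \o f) = rcomp (rgraph Y Z g) (rgraph X Y f)) /\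
  (forall X Y : cobj C, forall (f g : ccar X -> ccar Y), rgraph X Y f = rgraph X Y g -> f = g) /\
  (* moreover part *)
  ((forall X Y (f : ccar X -> ccar Y), chom X Y f <-> is_crel pe (rgraph X Y f)) ->
   forall X Y (r : CRel pe X Y),
     (forall x, exists! y, sval r x y) <->
     (exists f : ccar X -> ccar Y, chom X Y f /\ sval r = rgraph X Y f)).
Proof.
split.
  exists (Rops unitO Hprod Heq). split; first exact: (Rops_tsmc Hprod Hunit Heq).
  by do 10 (split; first done).
split; first exact: Hgraph.
split; first done.
split.
  move=> X Y Z f g. apply: functional_extensionality => x; apply: functional_extensionality => z.
  apply: propositional_extensionality. rewrite /rgraph /rcomp /=.
  split; [move=> <-; by exists (f x) | by move=> [y [-> ->]]].
split.
  move=> X Y f g e. apply: functional_extensionality => x.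
  have := f_equal (fun R => R x (f x)) e. rewrite /rgraph /= => h. by have <- : g x = f x by rewrite -h.
move=> Hiff X Y [r hr] /=. split.
- move=> H. have [f hf] : exists f : ccar X -> ccar Y, forall x, r x (f x) /\ forall y, r x y -> f x = y.
    exists (fun x => proj1_sig (constructive_indefinite_description _ (H x))).
    move=> x. case: (constructive_indefinite_description _ (H x)) => y [h1 h2] /=.
    split=> // y' /h2 //.
  have ef : r = rgraph X Y f.
    apply: functional_extensionality => x; apply: functional_extensionality => y.
    apply: propositional_extensionality. rewrite /rgraph. split; first by case: (hf x) => _; apply.
    move=> <-. by case: (hf x).
  exists f. split=> //. apply/Hiff. by rewrite -ef.
- move=> [f [_ ->]] x. exists (f x). by split.
Qed.
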